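(* Let $n\ge 2$ and $k\in\{0,1,\dots,n-1\}$. The diagonalizable matrices (those similar to a diagonal matrix) contained in $(\mathbb{C}^{n\times n})_k$ form a Zariski dense subset of $(\mathbb{C}^{n\times n})_k$.
   Context: $(\mathbb{C}^{n\times n})_k=\{A\in\mathbb{C}^{n\times n}\mid \deg(m_A)\le n-k\}$, where $m_A$ is the minimal polynomial of $A$. *)

(* Defs.v *)
From HB Require Import structures.
From mathcomp Require Import all_boot all_order all_algebra.
From mathcomp Require Import mpoly.
From mathcomp Require Import reals.
From mathcomp Require Import complex.
Set Implicit Arguments. Unset Strict Implicit. Unset Printing Implicit Defensive.
Import GRing.Theory Num.Theory.
Local Open Scope ring_scope.

(* The field of complex numbers: R[i] for a real field R : realType
   (any realType is isomorphic to the reals, so R[i] is (isomorphic to) C). *)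

Definition mx_eval (F : comNzRingType) (m : nat) (p : {mpoly F[m * m]})
  (A : 'M[F]_m) : F := p.@[fun i => mxvec A 0 i].

Definition zariski_closure (F : comNzRingType) (m : nat) (S : 'M[F]_m -> Prop) :
  'M[F]_m -> Prop :=
  fun A => forall p : {mpoly F[m * m]},
    (forall B, S B -> mx_eval p B = 0) -> mx_eval p A = 0.

Definition zariski_dense_in (F : comNzRingType) (m : nat)
  (S T : 'M[F]_m -> Prop) : Prop :=
  (forall A, S A -> T A) /\ (forall A, T A -> zariski_closure S A).

(* (F^{m x m})_k = { A | deg (m_A) <= m - k }, for m = n.+1 >= 1
   (mxminpoly needs a dimension of the form n.+1). *)
Definition mx_layer (F : fieldType) (n k : nat) : 'M[F]_n.+1 -> Prop :=
  fun A => ((size (mxminpoly A)).-1 <= n.+1 - k)%N.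

(* Main.v *)
Require Import Defs.
From HB Require Import structures.
From mathcomp Require Import all_boot all_order all_algebra.
From mathcomp Require Import mpoly.
From mathcomp Require Import reals.
From mathcomp Require Import complex.
From mathcomp Require Import ring.
Set Implicit Arguments. Unset Strict Implicit. Unset Printing Implicit Defensive.
Import GRing.Theory Num.Theory.
Local Open Scope ring_scope.
Section Pert.
Variables (F : fieldType) (N : nat) (A : 'M[F]_N.+1) (d : nat) (mu : nat -> F).
Hypothesis hm : horner_mx A (\prod_(i < d) ('X - (mu i)%:P)) = 0.

Let P j := horner_mx A (\prod_(i < j) ('X - (mu i)%:P)).
Let K j := kermx (P j).
Let Pi j := pinvmx (K j) *m K j.
Definition Dp := \sum_(i < d) (1%:M - Pi i.+1).

Lemma hXsub (B : 'M[F]_N.+1) c : horner_mx B ('X - c%:P) = B - c%:M.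
Proof. by rewrite rmorphB /= horner_mx_X horner_mx_C. Qed.

Lemma Precr j : P j.+1 = (A - (mu j)%:M) *m P j.
Proof.
rewrite /P big_ord_recr /= mulrC rmorphM /= hXsub; done.
Qed.

Lemma Kmono i j : (i <= j)%N -> (K i <= K j)%MS.
Proof.
elim: j => [|j IH]; first by rewrite leqn0 => /eqP ->.
rewrite leq_eqVlt => /orP [/eqP -> //| /IH hij].
apply: submx_trans hij _; rewrite sub_kermx.
rewrite /P big_ord_recr /= rmorphM /= mulmxA mulmx_ker mul0mx //.
Qed.

Lemma stepA m (u : 'M_(m, N.+1)) j : (u <= K j.+1)%MS -> (u *m (A - (mu j)%:M) <= K j)%MS.
Proof.
rewrite !sub_kermx -mulmxA -Precr; done.
Qed.

Lemma stepD m (u : 'M_(m, N.+1)) j : (j < d)%N -> (u <= K j.+1)%MS ->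
  (u *m Dp - (j%:R) *: u <= K j)%MS.
Proof.
move=> jd hu.
have -> : (j%:R : F) *: u = \sum_(i < d | (i < j)%N) u.
  by rewrite -(big_ord_widen _ (fun=> u) (ltnW jd)) sumr_const card_ord scaler_nat.
rewrite /Dp mulmx_sumr (bigID (fun i : 'I_d => (i < j)%N)) /= addrAC -sumrB.
apply: addmx_sub; apply: summx_sub => i hi.
  rewrite mulmxBr mulmx1 addrAC subrr add0r.
  rewrite (eqmx_opp _) /Pi mulmxA; apply: submx_trans (submxMl _ _) _.
  exact: Kmono.
rewrite mulmxBr mulmx1 /Pi mulmxA mulmxKpV ?subrr ?sub0mx //.
apply: submx_trans hu (Kmono _); by rewrite ltnS leqNgt.
Qed.

Lemma perturb_ok t : horner_mx (A + t *: Dp)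
   (\prod_(i < d) ('X - (mu i + t * i%:R)%:P)) = 0.
Proof.
set M := A + t *: Dp.
have step : forall m (u : 'M_(m, N.+1)) j, (j < d)%N -> (u <= K j.+1)%MS ->
    (u *m (M - (mu j + t * j%:R)%:M) <= K j)%MS.
  move=> m u j jd hu.
  have -> : M - (mu j + t * j%:R)%:M = (A - (mu j)%:M) + t *: (Dp - (j%:R)%:M).
    rewrite raddfD /=. have -> : (t * j%:R)%:M = t *: (j%:R)%:M :> 'M[F]_N.+1 by rewrite scale_scalar_mx. rewrite /M scalerBr.
    by rewrite opprD !addrA; congr (_ + _); rewrite addrAC.
  rewrite mulmxDr; apply: addmx_sub; first exact: stepA.
  rewrite -scalemxAr; apply: scalemx_sub.
  by rewrite mulmxBr mul_mx_scalar; apply: stepD.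
have main : forall j, (j <= d)%N -> forall (u : 'M_(N.+1)), (u <= K j)%MS ->
    u *m horner_mx M (\prod_(i < j) ('X - (mu i + t * i%:R)%:P)) = 0.
  elim=> [_ u|j IH jd u hu].
    by rewrite /K /P !big_ord0 !rmorph1 sub_kermx => /eqP.
  rewrite big_ord_recr /= mulrC rmorphM /= hXsub mulmxA.
  apply: IH; [exact: ltnW | exact: step].
have := main d (leqnn d) 1%:M.
rewrite mul1mx; apply; rewrite /K /P hm sub_kermx mulmx0 //.
Qed.
End Pert.
Lemma mx_eval_line (F : fieldType) m (p : {mpoly F[m * m]}) (A D : 'M[F]_m) :
  exists q : {poly F}, forall t, q.[t] = mx_eval p (A + t *: D).
Proof.
exists (\sum_(mm <- msupp p) p@_mm *:
   \prod_(i < m * m) ((mxvec A 0 i)%:P + (mxvec D 0 i) *: 'X) ^+ mm i).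
move=> t; rewrite /mx_eval mevalE horner_sum; apply: eq_bigr => mm _.
rewrite hornerZ horner_prod; congr (_ * _); apply: eq_bigr => i _.
rewrite horner_exp hornerD hornerC hornerZ hornerX; congr (_ ^+ _).
by rewrite linearD linearZ /= !mxE mulrC.
Qed.

Lemma poly_zero_all (F : numDomainType) (q : {poly F}) :
  (forall t, q.[t] = 0) -> q = 0.
Proof.
move=> hq; apply: (@roots_geq_poly_eq0 _ q [seq i%:R | i <- iota 0 (size q)]).
- by apply/allP => x _; apply/eqP; rewrite hq.
- rewrite map_inj_uniq ?iota_uniq // => a b /eqP; rewrite eqr_nat => /eqP //.
- by rewrite size_map size_iota.
Qed.

Theorem proposition2p1 (R : realType) (n k : nat)
  (hn : (2 <= n.+1)%N) (hk : (k <= n)%N) :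
  zariski_dense_in
    (fun A : 'M[R[i]]_n.+1 => mx_layer k A /\ diagonalizable A)
    (mx_layer k).
Proof.
split; first by move=> A [].
move=> A hA p hp.
pose F := R[i].
have [s hs] := closed_field_poly_normal (mxminpoly A).
move: hs; rewrite (monicP (mxminpoly_monic A)) scale1r => hs.
pose d := size s; pose mu i := nth 0 s i.
have hprod : \prod_(z <- s) ('X - z%:P) = \prod_(i < d) ('X - (mu i)%:P).
  by rewrite (big_nth 0) big_mkord.
have hm : horner_mx A (\prod_(i < d) ('X - (mu i)%:P)) = 0.
  by rewrite -hprod -hs mx_root_minpoly.
have hdA : (d <= n.+1 - k)%N.
  by move: hA; rewrite /mx_layer hs size_prod_XsubC.
pose D := Dp A d mu.
have [q hq] := mx_eval_line p A D.
pose h := \prod_(i < d) \prod_(j < d | (i < j)%N)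
   ((mu j - mu i)%:P + (j%:R - i%:R) *: 'X : {poly F}).
have hh0 : h != 0.
  apply/prodf_neq0 => i _; apply/prodf_neq0 => j ij.
  apply/eqP => /(congr1 (fun r : {poly F} => r`_1)).
  rewrite coefD coefC coefZ coefX /= add0r mulr1 coef0 => /eqP.
  by rewrite subr_eq0 eqr_nat eq_sym (ltn_eqF ij).
have hqh : forall t, (q * h).[t] = 0.
  move=> t; rewrite hornerM.
  have [->|ht] := eqVneq h.[t] 0; first by rewrite mulr0.
  suff hS : mx_layer k (A + t *: D) /\ diagonalizable (A + t *: D).
    by rewrite hq (hp _ hS) mul0r.
  pose rs := [seq mu j + t * j%:R | j <- iota 0 d].
  have hrs : \prod_(x <- rs) ('X - x%:P) = \prod_(i < d) ('X - (mu i + t * i%:R)%:P).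
    rewrite /rs; have -> : iota 0 d = index_iota 0 d by rewrite /index_iota subn0.
    by rewrite big_map big_mkord.
  have hdv : mxminpoly (A + t *: D) %| \prod_(x <- rs) ('X - x%:P).
    by rewrite hrs; apply: mxminpoly_min; apply: perturb_ok.
  have urs : uniq rs.
    rewrite map_inj_in_uniq ?iota_uniq // => a b; rewrite !mem_iota /= !add0n => ad bd hab.
    move: ht; rewrite /h horner_prod.
    have key : forall a b, (a < b)%N -> (a < d)%N -> (b < d)%N ->
        mu a + t * a%:R = mu b + t * b%:R ->
        (\prod_(i < d) (\prod_(j < d | (i < j)%N)
          ((mu j - mu i)%:P + (j%:R - i%:R) *: 'X : {poly F})).[t]) = 0.
      move=> a' b' ab ad' bd' e.
      apply/eqP; rewrite prodf_seq_eq0; apply/hasP.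
      exists (Ordinal ad'); first by rewrite mem_index_enum.
      rewrite /= horner_prod prodf_seq_eq0; apply/hasP.
      exists (Ordinal bd'); first by rewrite mem_index_enum.
      rewrite /= ab /= hornerD hornerC hornerZ hornerX.
      have : (mu b' + t * b'%:R) - (mu a' + t * a'%:R) = 0 by rewrite e subrr.
      by move=> e2; apply/eqP; rewrite -e2; ring.
    case: (ltngtP a b) => [ab|ba|//].
      by rewrite (key a b ab ad bd hab) eqxx.
    by rewrite (key b a ba bd ad (esym hab)) eqxx.
  split.
    rewrite /mx_layer; apply: leq_trans hdA.
    have := dvdp_leq (monic_neq0 (monic_prod_XsubC _ _ _)) hdv.
    rewrite size_prod_XsubC size_map size_iota => hle.
    by move: hle; case: (size (mxminpoly _)).
  by apply/diagonalizableP; exists rs.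
have hq0 : q = 0.
  apply/eqP; move: hh0; apply: contraR => qn0.
  have : q * h == 0 by apply/eqP; apply: poly_zero_all.
  by rewrite mulf_eq0 (negbTE qn0).
by have := hq 0; rewrite hq0 horner0 scale0r addr0.
Qed.
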